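(* Consider Algorithm SS-SQP (described in the context) under the standing assumptions (A1), (A2). Let $\kappa_y>0$ be a constant with $\|y_k\|\le\kappa_y$ for all $k$, and let $\kappa_l>0$ be a constant with $\Delta l(x_k,\bar\tau_k,\bar g_k,\bar d_k)\ge\kappa_l\bar\tau_k(\|\bar d_k\|^2+\|c_k\|)$ for all $k$ (such constants exist). Then for all $k\in\mathbb{N}$: (1) if $\|\bar g_k-\nabla f_k\|\le\kappa_{\mathrm{FO}}\alpha_k\sqrt{\Delta l(x_k,\bar\tau_k,\bar g_k,\bar d_k)}$, then $$\bar\tau_k|\bar g_k^T\bar d_k|\le\left(\frac{\max\{\kappa_H,\kappa_y\}}{\kappa_l}+\frac{\sqrt{\bar\tau_k}(1+\kappa_H\zeta^{-1})\kappa_{\mathrm{FO}}\alpha_k}{\sqrt{\kappa_l}}\right)\Delta l(x_k,\bar\tau_k,\bar g_k,\bar d_k);$$ (2) if $\|\bar g_k-\nabla f_k\|\le\epsilon_g$, then $$\bar\tau_k|\bar g_k^T\bar d_k|\le\frac{\max\{\kappa_H,\kappa_y\}+1}{\kappa_l}\Delta l(x_k,\bar\tau_k,\bar g_k,\bar d_k)+\frac{\bar\tau_k(1+\kappa_H\zeta^{-1})^2}{4}\epsilon_g^2.$$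
   Context: Problem: $\min_{x\in\mathbb{R}^n}f(x)$ s.t. $c(x)=0$ with $f,c$ continuously differentiable, $c:\mathbb{R}^n\to\mathbb{R}^m$, $m\le n$; $\nabla f_k=\nabla f(x_k)$, $c_k=c(x_k)$, $J_k=\nabla c(x_k)^T$; $\|\cdot\|$ Euclidean norm. $\Delta l(x,\tau,g,d)=-\tau g^Td+\|c(x)\|_1$. $\kappa_{\mathrm{FO}}\ge0$ and $\epsilon_g\ge0$ are constants (parameters of the first-order oracle). Standing assumption (A1): there is an open convex set $\mathcal{X}$ containing all iterates and trial iterates; $f$ bounded below, $\nabla f$ $L$-Lipschitz and bounded, $c$ bounded, each $\nabla c_i$ Lipschitz and bounded on $\mathcal{X}$; singular values of $\nabla c(x)^T$ bounded away from zero on $\mathcal{X}$. (A2): $H_k$ symmetric, chosen independently of $\bar g_k$, $\|H_k\|\le\kappa_H$, $u^TH_ku\ge\zeta\|u\|^2$ for $u\in\mathrm{Null}(J_k)$, $\kappa_H,\zeta>0$. Algorithm SS-SQP: inputs $x_0$, $\bar\tau_{-1}>0$, $\alpha_{\max}\in(0,1]$, $\alpha_0\in(0,\alpha_{\max}]$, $\epsilon_f\ge0$, $\gamma,\theta,\sigma,\epsilon_\tau\in(0,1)$. At iteration $k$: random gradient estimate $\bar g_k$; solve $\begin{bmatrix}H_k & J_k^T\\ J_k&0\end{bmatrix}\begin{bmatrix}\bar d_k\\ \bar y_k\end{bmatrix}=-\begin{bmatrix}\bar g_k\\ c_k\end{bmatrix}$; $\bar\tau_k^{\rm trial}=\infty$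 if $\bar g_k^T\bar d_k+\max\{\bar d_k^TH_k\bar d_k,0\}\le0$, else $(1-\sigma)\|c_k\|_1/(\bar g_k^T\bar d_k+\max\{\bar d_k^TH_k\bar d_k,0\})$; $\bar\tau_k=\bar\tau_{k-1}$ if $\bar\tau_{k-1}\le\bar\tau_k^{\rm trial}$, else $\min\{(1-\epsilon_\tau)\bar\tau_{k-1},\bar\tau_k^{\rm trial}\}$; $x_k^+=x_k+\alpha_k\bar d_k$; with objective estimates $\bar f$ and $\bar\phi(x,\tau;\xi)=\tau\bar f(x;\xi)+\|c(x)\|_1$, set $x_{k+1}=x_k^+$, $\alpha_{k+1}=\min\{\alpha_{\max},\alpha_k/\gamma\}$ if $\bar\phi(x_k^+,\bar\tau_k;\xi_k^+)\le\bar\phi(x_k,\bar\tau_k;\xi_k^0)-\alpha_k\theta\Delta l(x_k,\bar\tau_k,\bar g_k,\bar d_k)+2\bar\tau_k\epsilon_f$, else $x_{k+1}=x_k$, $\alpha_{k+1}=\gamma\alpha_k$. The deterministic pair $(d_k,y_k)$ solves the same linear system with $\bar g_k$ replaced by $\nabla f_k$. *)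

(* Defs.v *)
From HB Require Import structures.
From mathcomp Require Import all_boot all_order all_algebra.
From mathcomp Require Import reals.
Set Implicit Arguments. Unset Strict Implicit. Unset Printing Implicit Defensive.
Import Order.TTheory GRing.Theory Num.Theory.
Local Open Scope ring_scope.

Section Defs.
Variable R : realType.

Definition dotv n (u v : 'cV[R]_n) : R := (u^T *m v) 0 0.
Definition enorm n (u : 'cV[R]_n) : R := Num.sqrt (dotv u u).
Definition norm1 n (u : 'cV[R]_n) : R := \sum_i `|u i 0|.

Definition Dl n m (c : 'cV[R]_n -> 'cV[R]_m) (x : 'cV[R]_n) (tau : R)
  (g d : 'cV[R]_n) : R := - tau * dotv g d + norm1 (c x).

Definition is_grad n (f : 'cV[R]_n -> R) (g x : 'cV[R]_n) : Prop :=
  forall eps, 0 < eps -> exists2 del, 0 < del &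
    forall z, enorm (z - x) < del ->
      `|f z - f x - dotv g (z - x)| <= eps * enorm (z - x).

Definition is_jac n m (c : 'cV[R]_n -> 'cV[R]_m) (J : 'M[R]_(m, n))
  (x : 'cV[R]_n) : Prop :=
  forall i : 'I_m, is_grad (fun z => c z i 0) (row i J)^T x.

Definition cont_at n p (F : 'cV[R]_n -> 'cV[R]_p) (x : 'cV[R]_n) : Prop :=
  forall eps, 0 < eps -> exists2 del, 0 < del &
    forall z, enorm (z - x) < del -> enorm (F z - F x) < eps.

(* f and c continuously differentiable on R^n, with gradient gradf and
   Jacobian Jc = (nabla c)^T *)
Definition C1_problem n m (f : 'cV[R]_n -> R) (c : 'cV[R]_n -> 'cV[R]_m)
  (gradf : 'cV[R]_n -> 'cV[R]_n) (Jc : 'cV[R]_n -> 'M[R]_(m, n)) : Prop :=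
  (forall x, is_grad f (gradf x) x) /\ (forall x, is_jac c (Jc x) x) /\
  (forall x, cont_at gradf x) /\
  (forall (i : 'I_m) x, cont_at (fun z => (row i (Jc z))^T) x).

Definition open_set n (X : 'cV[R]_n -> Prop) : Prop :=
  forall x, X x -> exists2 r, 0 < r & forall z, enorm (z - x) < r -> X z.

Definition convex_set n (X : 'cV[R]_n -> Prop) : Prop :=
  forall x z (t : R), X x -> X z -> 0 <= t <= 1 -> X ((1 - t) *: x + t *: z).

Definition assumption_A1 n m (f : 'cV[R]_n -> R) (c : 'cV[R]_n -> 'cV[R]_m)
  (gradf : 'cV[R]_n -> 'cV[R]_n) (Jc : 'cV[R]_n -> 'M[R]_(m, n))
  (x xp : nat -> 'cV[R]_n) : Prop :=
  exists X : 'cV[R]_n -> Prop,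
  [/\ open_set X, convex_set X, (forall k, X (x k) /\ X (xp k)) &
      (exists flow, forall z, X z -> flow <= f z)] /\
  [/\ (exists L, 0 <= L /\ forall z w, X z -> X w ->
           enorm (gradf z - gradf w) <= L * enorm (z - w)),
      (exists B, forall z, X z -> enorm (gradf z) <= B) &
      (exists B, forall z, X z -> enorm (c z) <= B)] /\
  [/\ (forall i : 'I_m, exists L, 0 <= L /\ forall z w, X z -> X w ->
           enorm ((row i (Jc z))^T - (row i (Jc w))^T) <= L * enorm (z - w)),
      (forall i : 'I_m, exists B, forall z, X z -> enorm (row i (Jc z))^T <= B)
    & (* singular values of nabla c(x)^T = (Jc x)^T bounded away from zero *)
      (exists s, 0 < s /\ forall z, X z -> forall w : 'cV[R]_m,
           s * enorm w <= enorm ((Jc z)^T *m w))].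

(* Assumption (A2) (pathwise part) *)
Definition assumption_A2 n m (Jc : 'cV[R]_n -> 'M[R]_(m, n))
  (x : nat -> 'cV[R]_n) (H : nat -> 'M[R]_n) (kappaH zeta : R) : Prop :=
  [/\ 0 < kappaH, 0 < zeta &
   forall k, [/\ (H k)^T = H k,
     (forall u, enorm (H k *m u) <= kappaH * enorm u) &
     (forall u, Jc (x k) *m u = 0 -> zeta * enorm u ^+ 2 <= dotv u (H k *m u))]].

Definition kkt n m (H : 'M[R]_n) (J : 'M[R]_(m, n)) (g : 'cV[R]_n)
  (cx : 'cV[R]_m) (d : 'cV[R]_n) (y : 'cV[R]_m) : Prop :=
  H *m d + J^T *m y = - g /\ J *m d = - cx.

(* trial merit parameter; None encodes +infinity *)
Definition tau_trial n m (sigma : R) (H : 'M[R]_n) (g d : 'cV[R]_n)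
  (cx : 'cV[R]_m) : option R :=
  let den := dotv g d + Num.max (dotv d (H *m d)) 0 in
  if den <= 0 then None else Some ((1 - sigma) * norm1 cx / den).

Definition tau_update (eps_tau prev : R) (trial : option R) : R :=
  match trial with
  | None => prev
  | Some t => if prev <= t then prev else Num.min ((1 - eps_tau) * prev) t
  end.

(* One realization of Algorithm SS-SQP: gbar k are the realized stochastic
   gradient estimates, fb0 k = fbar(x_k; xi_k^0) and fbp k = fbar(x_k^+; xi_k^+)
   the realized objective estimates. *)
Definition SS_SQP n m (c : 'cV[R]_n -> 'cV[R]_m)
  (Jc : 'cV[R]_n -> 'M[R]_(m, n))
  (x0 : 'cV[R]_n) (tau_m1 alpha_max alpha0 eps_f gamma theta sigma eps_tau : R)
  (H : nat -> 'M[R]_n) (gbar : nat -> 'cV[R]_n) (fb0 fbp : nat -> R)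
  (x : nat -> 'cV[R]_n) (alpha : nat -> R) (dbar : nat -> 'cV[R]_n)
  (ybar : nat -> 'cV[R]_m) (taubar : nat -> R) (xp : nat -> 'cV[R]_n) : Prop :=
  [/\ x 0%N = x0, alpha 0%N = alpha0 &
      forall k, kkt (H k) (Jc (x k)) (gbar k) (c (x k)) (dbar k) (ybar k)] /\
  (forall k, taubar k = tau_update eps_tau
       (if k is k'.+1 then taubar k' else tau_m1)
       (tau_trial sigma (H k) (gbar k) (dbar k) (c (x k)))) /\
  (forall k, xp k = x k + alpha k *: dbar k) /\
  (forall k,
     if taubar k * fbp k + norm1 (c (xp k)) <=
        taubar k * fb0 k + norm1 (c (x k))
        - alpha k * theta * Dl c (x k) (taubar k) (gbar k) (dbar k)
        + 2 * taubar k * eps_f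
     then x k.+1 = xp k /\ alpha k.+1 = Num.min alpha_max (alpha k / gamma)
     else x k.+1 = x k /\ alpha k.+1 = gamma * alpha k).

End Defs.

(* Main.v *)
Require Import Defs.
From HB Require Import structures.
From mathcomp Require Import all_boot all_order all_algebra.
From mathcomp Require Import reals.
From mathcomp Require Import ring lra.
Import Order.TTheory GRing.Theory Num.Theory.
Local Open Scope ring_scope.

Section Aux.
Context {R : realType}.
Context {n : nat}.
Implicit Types u v w : 'cV[R]_n.

Lemma dotvE u v : dotv u v = \sum_i u i 0 * v i 0.
Proof. by rewrite /dotv mxE; apply: eq_bigr => i _; rewrite mxE. Qed.

Lemma dotvC u v : dotv u v = dotv v u.
Proof. by rewrite !dotvE; apply: eq_bigr => i _; rewrite mulrC. Qed.

Lemma dotvDl u v w : dotv (u + v) w = dotv u w + dotv v w.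
Proof. by rewrite !dotvE -big_split; apply: eq_bigr => i _; rewrite !mxE mulrDl. Qed.

Lemma dotvNl u w : dotv (- u) w = - dotv u w.
Proof. by rewrite !dotvE -sumrN; apply: eq_bigr => i _; rewrite !mxE mulNr. Qed.

Lemma dotvBl u v w : dotv (u - v) w = dotv u w - dotv v w.
Proof. by rewrite dotvDl dotvNl. Qed.

Lemma dotvZl (a : R) u w : dotv (a *: u) w = a * dotv u w.
Proof. by rewrite !dotvE mulr_sumr; apply: eq_bigr => i _; rewrite !mxE mulrA. Qed.

Lemma dotvDr u v w : dotv w (u + v) = dotv w u + dotv w v.
Proof. by rewrite dotvC dotvDl !(dotvC w). Qed.

Lemma dotvNr u w : dotv w (- u) = - dotv w u.
Proof. by rewrite dotvC dotvNl dotvC. Qed.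

Lemma dotvBr u v w : dotv w (u - v) = dotv w u - dotv w v.
Proof. by rewrite dotvDr dotvNr. Qed.

Lemma dotvZr (a : R) u w : dotv w (a *: u) = a * dotv w u.
Proof. by rewrite dotvC dotvZl dotvC. Qed.

Lemma dotv0l w : dotv 0 w = 0.
Proof. by rewrite dotvE big1 // => i _; rewrite mxE mul0r. Qed.

Lemma dotv_ge0 u : 0 <= dotv u u.
Proof. by rewrite dotvE; apply: sumr_ge0 => i _; rewrite -expr2 sqr_ge0. Qed.

Lemma enorm_ge0 u : 0 <= enorm u.
Proof. exact: sqrtr_ge0. Qed.

Lemma enorm_sq u : enorm u ^+ 2 = dotv u u.
Proof. by rewrite sqr_sqrtr // dotv_ge0. Qed.

Lemma enorm0_dot u v : enorm u = 0 -> dotv u v = 0.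
Proof.
move=> h; have : dotv u u = 0 by rewrite -enorm_sq h expr0n.
rewrite dotvE => /psumr_eq0P h0.
rewrite dotvE big1 // => i _.
have /eqP : u i 0 * u i 0 = 0 by apply: h0 => // j _; rewrite -expr2 sqr_ge0.
by rewrite mulf_eq0 orbb => /eqP ->; rewrite mul0r.
Qed.

Lemma CS u v : `|dotv u v| <= enorm u * enorm v.
Proof.
have [a0|apos] := eqVneq (enorm u) 0.
  by rewrite enorm0_dot // a0 normr0 mul0r.
have [b0|bpos] := eqVneq (enorm v) 0.
  by rewrite dotvC enorm0_dot // b0 normr0 mulr0.
have ha : 0 < enorm u by rewrite lt_neqAle eq_sym apos enorm_ge0.
have hb : 0 < enorm v by rewrite lt_neqAle eq_sym bpos enorm_ge0.
have hw (s : R) : 0 <= dotv (enorm v *: u + s *: v) (enorm v *: u + s *: v).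
  exact: dotv_ge0.
have expand (s : R) : dotv (enorm v *: u + s *: v) (enorm v *: u + s *: v) =
   enorm v ^+ 2 * dotv u u + 2 * s * enorm v * dotv u v + s ^+ 2 * dotv v v.
  rewrite !dotvDl !dotvDr !dotvZl !dotvZr (dotvC v u); ring.
have h1 := hw (- enorm u); have h2 := hw (enorm u).
rewrite expand -!enorm_sq in h1; rewrite expand -!enorm_sq in h2.
set a := enorm u in ha h1 h2 *; set b := enorm v in hb h1 h2 *.
set D := dotv u v in h1 h2 *.
have hab : 0 < 2 * (a * b) by rewrite mulr_gt0 // mulr_gt0.
have e1 : 0 <= 2 * (a * b) * (a * b - D).
  by rewrite (_ : _ * _ = b ^+ 2 * a ^+ 2 + 2 * (- a) * b * D + (- a) ^+ 2 * b ^+ 2) //; ring.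
have e2 : 0 <= 2 * (a * b) * (a * b + D).
  by rewrite (_ : _ * _ = b ^+ 2 * a ^+ 2 + 2 * a * b * D + a ^+ 2 * b ^+ 2) //; ring.
rewrite pmulr_rge0 // in e1; rewrite pmulr_rge0 // in e2.
rewrite ler_norml; apply/andP; split; lra.
Qed.

End Aux.

Lemma dotv_mul (R : realType) p q (A : 'M[R]_(p, q)) (u : 'cV[R]_p) (v : 'cV[R]_q) :
  dotv u (A *m v) = dotv (A^T *m u) v.
Proof. by rewrite /dotv trmx_mul trmxK mulmxA. Qed.

Lemma key (R : realType) n m (Hk : 'M[R]_n) (J : 'M[R]_(m, n))
  (g gf d db : 'cV[R]_n) (yb y cx : 'cV[R]_m) (kH z ky : R) :
  0 < kH -> 0 < z -> Hk^T = Hk ->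
  (forall u, enorm (Hk *m u) <= kH * enorm u) ->
  (forall u, J *m u = 0 -> z * enorm u ^+ 2 <= dotv u (Hk *m u)) ->
  kkt Hk J g cx db yb -> kkt Hk J gf cx d y -> enorm y <= ky ->
  `|dotv g db| <= kH * enorm db ^+ 2 + ky * enorm cx
                  + (1 + kH / z) * enorm (g - gf) * enorm db.
Proof.
move=> hkH hz hsym hHb hcurv [hb1 hb2] [hd1 hd2] hy.
set u : 'cV[R]_n := db - d; set e : 'cV[R]_n := g - gf; set w : 'cV[R]_m := yb - y.
have hJu : J *m u = 0 by rewrite mulmxBr hb2 hd2 subrr.
have hHu : Hk *m u = - e - J^T *m w.
  have h0 : Hk *m u + J^T *m w = - e.
    rewrite /u /w !mulmxBr addrACA -opprD hb1 hd1 /e opprK opprB addrC //.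
  by rewrite -h0 addrK.
have hdJ (v : 'cV[R]_n) (t : 'cV[R]_m) : dotv v (J^T *m t) = dotv (J *m v) t.
  by rewrite dotv_mul trmxK.
have hu1 : dotv u (Hk *m u) = - dotv u e.
  by rewrite hHu dotvBr dotvNr hdJ hJu dotv0l subr0.
have hCSue := CS u e.
have hue : z * enorm u <= enorm e.
  have := hcurv u hJu; rewrite hu1 => h.
  have h' : z * enorm u ^+ 2 <= enorm u * enorm e.
    apply: le_trans h _; apply: le_trans (ler_norm _) _; by rewrite normrN.
  have [u0|upos] := eqVneq (enorm u) 0.
    by rewrite u0 mulr0 enorm_ge0.
  have hu : 0 < enorm u by rewrite lt_neqAle eq_sym upos enorm_ge0.
  rewrite -(ler_pM2l hu) (_ : _ * (z * _) = z * enorm u ^+ 2) //; ring.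
have hub : enorm u <= enorm e / z by rewrite ler_pdivlMr // mulrC.
have hg : g = gf + e by rewrite /e addrC subrK.
have hgf : gf = - (Hk *m d + J^T *m y) by rewrite hd1 opprK.
have hdd : d = db - u by rewrite /u opprB addrC subrK.
have hdot : dotv g db = - dotv (Hk *m db) db + dotv (Hk *m db) u
                        + dotv cx y + dotv e db.
  rewrite hg dotvDl hgf dotvNl dotvDl (dotvC (J^T *m y)) hdJ hb2 dotvNl.
  rewrite (dotvC (Hk *m d)) dotv_mul hsym hdd dotvBr (dotvC cx); ring.
rewrite hdot.
have t1 : `|dotv (Hk *m db) db| <= kH * enorm db ^+ 2.
  apply: le_trans (CS _ _) _; rewrite expr2 mulrA ler_wpM2r ?enorm_ge0 //.
have t2 : `|dotv (Hk *m db) u| <= kH * enorm db * (enorm e / z).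
  apply: le_trans (CS _ _) _; apply: ler_pM; rewrite ?enorm_ge0 //.
have t3 : `|dotv cx y| <= ky * enorm cx.
  apply: le_trans (CS _ _) _; rewrite mulrC ler_wpM2r ?enorm_ge0 //.
have t4 := CS e db.
have ne := enorm_ge0 e; have nd := enorm_ge0 db.
set A := dotv (Hk *m db) db; set B := dotv (Hk *m db) u.
set C := dotv cx y; set E := dotv e db.
have tri : `|- A + B + C + E| <= `|A| + `|B| + `|C| + `|E|.
  apply: le_trans (ler_normD _ _) _; apply: lerD => //.
  apply: le_trans (ler_normD _ _) _; apply: lerD => //.
  by apply: le_trans (ler_normD _ _) _; rewrite normrN.
have -> : (1 + kH / z) * enorm e * enorm db =
   enorm e * enorm db + kH * enorm db * (enorm e / z) by ring.
lra.
Qed.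

Arguments key {R n m Hk J g gf d db yb y cx kH z ky}.

Lemma tau_ge0 (R : realType) n m (sigma eps : R) (Hk : 'M[R]_n) (g d : 'cV[R]_n)
  (cx : 'cV[R]_m) prev :
  0 < sigma < 1 -> 0 < eps < 1 -> 0 <= prev ->
  0 <= tau_update eps prev (tau_trial sigma Hk g d cx).
Proof.
move=> /andP[s0 s1] /andP[e0 e1] hp; rewrite /tau_trial /=.
case: ifP => hden //=.
have ht : 0 <= (1 - sigma) * norm1 cx /
              (dotv g d + Num.max (dotv d (Hk *m d)) 0).
  apply: divr_ge0; last by apply: ltW; rewrite ltNge hden.
  apply: mulr_ge0; first by rewrite subr_ge0 ltW.
  by apply: sumr_ge0 => i _; rewrite normr_ge0.
case: ifP => _ //; rewrite le_min ht andbT mulr_ge0 // subr_ge0 ltW //.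
Qed.

Theorem lemma3p15 (R : realType) (n m : nat)
  (f : 'cV[R]_n -> R) (c : 'cV[R]_n -> 'cV[R]_m)
  (gradf : 'cV[R]_n -> 'cV[R]_n) (Jc : 'cV[R]_n -> 'M[R]_(m, n))
  (x0 : 'cV[R]_n)
  (tau_m1 alpha_max alpha0 eps_f gamma theta sigma eps_tau : R)
  (kappaFO eps_g kappaH zeta kappa_y kappa_l : R)
  (H : nat -> 'M[R]_n) (gbar : nat -> 'cV[R]_n) (fb0 fbp : nat -> R)
  (x : nat -> 'cV[R]_n) (alpha : nat -> R) (dbar : nat -> 'cV[R]_n)
  (ybar : nat -> 'cV[R]_m) (taubar : nat -> R) (xp : nat -> 'cV[R]_n)
  (d : nat -> 'cV[R]_n) (y : nat -> 'cV[R]_m) :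
  (m <= n)%N ->
  C1_problem f c gradf Jc ->
  0 <= kappaFO -> 0 <= eps_g ->
  0 < tau_m1 -> 0 < alpha_max <= 1 -> 0 < alpha0 <= alpha_max -> 0 <= eps_f ->
  0 < gamma < 1 -> 0 < theta < 1 -> 0 < sigma < 1 -> 0 < eps_tau < 1 ->
  SS_SQP c Jc x0 tau_m1 alpha_max alpha0 eps_f gamma theta sigma eps_tau
    H gbar fb0 fbp x alpha dbar ybar taubar xp ->
  assumption_A1 f c gradf Jc x xp ->
  assumption_A2 Jc x H kappaH zeta ->
  (* deterministic pair (d_k, y_k) *)
  (forall k, kkt (H k) (Jc (x k)) (gradf (x k)) (c (x k)) (d k) (y k)) ->
  0 < kappa_y -> (forall k, enorm (y k) <= kappa_y) ->
  0 < kappa_l ->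
  (forall k, kappa_l * taubar k * (enorm (dbar k) ^+ 2 + enorm (c (x k)))
             <= Dl c (x k) (taubar k) (gbar k) (dbar k)) ->
  forall k : nat,
    let Dlk := Dl c (x k) (taubar k) (gbar k) (dbar k) in
    (enorm (gbar k - gradf (x k)) <= kappaFO * alpha k * Num.sqrt Dlk ->
       taubar k * `|dotv (gbar k) (dbar k)| <=
       (Num.max kappaH kappa_y / kappa_l
        + Num.sqrt (taubar k) * (1 + kappaH / zeta) * kappaFO * alpha k
          / Num.sqrt kappa_l) * Dlk)
    /\
    (enorm (gbar k - gradf (x k)) <= eps_g ->
       taubar k * `|dotv (gbar k) (dbar k)| <=
       (Num.max kappaH kappa_y + 1) / kappa_l * Dlk
       + taubar k * (1 + kappaH / zeta) ^+ 2 / 4 * eps_g ^+ 2).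
Proof.
move=> _ _ hFO heg htm1 _ _ _ _ _ hsig heps [[_ _ hkkt] [htauk _]] _
  [hkH hz hA2] hkktd hky hyb hkl hDl k Dlk.
have tk : 0 <= taubar k.
  elim: k {Dlk} => [|k IH]; rewrite htauk; apply: tau_ge0 => //; exact: ltW.
have [hsym hHb hcurv] := hA2 k.
have hk := key hkH hz hsym hHb hcurv (hkkt k) (hkktd k) (hyb k).
set T := taubar k in tk hk *.
set N := enorm (dbar k) in hk *.
set Cn := enorm (c (x k)) in hk *.
set E := enorm (gbar k - gradf (x k)) in hk *.
set G := dotv (gbar k) (dbar k) in hk *.
set M := Num.max kappaH kappa_y.
set a := 1 + kappaH / zeta in hk *.
have hD : kappa_l * T * (N ^+ 2 + Cn) <= Dlk := hDl k.
have hN := enorm_ge0 (dbar k); have hC := enorm_ge0 (c (x k)).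
have hE := enorm_ge0 (gbar k - gradf (x k)).
rewrite -/N -/Cn -/E in hN hC hE.
have hMH : kappaH <= M by rewrite le_max lexx.
have hMy : kappa_y <= M by rewrite le_max lexx orbT.
have ha : 0 <= a by rewrite /a; have := divr_ge0 (ltW hkH) (ltW hz); lra.
have hM0 : 0 <= M by lra.
have hN2 : 0 <= N ^+ 2 by rewrite sqr_ge0.
have hbase : T * `|G| <= M / kappa_l * Dlk + a * E * (T * N).
  have h1 : T * `|G| <= T * (M * (N ^+ 2 + Cn) + a * E * N).
    apply: ler_wpM2l => //; apply: le_trans hk _.
    have : kappaH * N ^+ 2 <= M * N ^+ 2 by rewrite ler_wpM2r.
    have : kappa_y * Cn <= M * Cn by rewrite ler_wpM2r.
    lra.
  have h2 : T * (M * (N ^+ 2 + Cn)) <= M / kappa_l * Dlk.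
    have -> : T * (M * (N ^+ 2 + Cn)) = M / kappa_l * (kappa_l * T * (N ^+ 2 + Cn)).
      by field; rewrite gt_eqF.
    by rewrite ler_wpM2l // divr_ge0 // ltW.
  lra.
have hTC : 0 <= kappa_l * T * Cn by rewrite mulr_ge0 // mulr_ge0 // ltW.
have hTN2 : T * N ^+ 2 <= Dlk / kappa_l.
  rewrite ler_pdivlMr //; lra.
have hDl0 : 0 <= Dlk.
  by apply: le_trans hD; rewrite mulr_ge0 // ?addr_ge0 // mulr_ge0 // ltW.
have hTN : 0 <= T * N by rewrite mulr_ge0.
split => hEb.
- have hsq : T * N <= Num.sqrt T * (Num.sqrt Dlk / Num.sqrt kappa_l).
    have -> : Num.sqrt T * (Num.sqrt Dlk / Num.sqrt kappa_l) =
              Num.sqrt (T * (Dlk / kappa_l)).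
      by rewrite sqrtrM // sqrtrM // sqrtrV // ltW.
    rewrite -(ger0_norm hTN) -sqrtr_sqr ler_sqrt; last first.
      by rewrite mulr_ge0 // mulr_ge0 // invr_ge0 ltW.
    have -> : (T * N) ^+ 2 = T * (T * N ^+ 2) by ring.
    by rewrite ler_wpM2l.
  have hsD : Num.sqrt Dlk ^+ 2 = Dlk by rewrite sqr_sqrtr.
  have hE0 : 0 <= kappaFO * alpha k * Num.sqrt Dlk by apply: le_trans hEb.
  have h3 : a * E * (T * N) <=
            a * (kappaFO * alpha k * Num.sqrt Dlk) *
            (Num.sqrt T * (Num.sqrt Dlk / Num.sqrt kappa_l)).
    apply: ler_pM => //; [by rewrite mulr_ge0 | by rewrite ler_wpM2l].
  have h4 : a * (kappaFO * alpha k * Num.sqrt Dlk) *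
            (Num.sqrt T * (Num.sqrt Dlk / Num.sqrt kappa_l)) =
            Num.sqrt T * a * kappaFO * alpha k / Num.sqrt kappa_l * Dlk.
    by rewrite -[in RHS]hsD; ring.
  lra.
- have h3 : a * E * (T * N) <= a * eps_g * (T * N).
    by rewrite ler_wpM2r // ler_wpM2l.
  have sq : 0 <= T * (N - a * eps_g / 2) ^+ 2 by rewrite mulr_ge0 // sqr_ge0.
  have -> : (M + 1) / kappa_l * Dlk = M / kappa_l * Dlk + Dlk / kappa_l by ring.
  lra.
Qed.
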